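(* If $A$ is a finitely generated pc monoid, then the seminormalization map $A\to A_{\mathrm{sn}}$ is a finite morphism, i.e. $A_{\mathrm{sn}}$ is a finite union of subsets $A\,b_i$ with $b_i\in A_{\mathrm{sn}}$.
   Context: A monoid is a pointed commutative monoid. pc: isomorphic to $C/I$ with $C$ cancellative ($ac=bc,c\ne0\Rightarrow a=b$) and $I$ an ideal. A monoid morphism $A\to B$ is finite if $B$ is a finite union of subsets $A b_i$ ($b_i\in B$). Reduced: $a^2=b^2,a^3=b^3\Rightarrow a=b$. Seminormal: reduced and $x^3=y^2\Rightarrow x=z^2,y=z^3$ for some $z$. The seminormalization $A\to A_{\mathrm{sn}}$ of a pc monoid is the (existing, unique) map to a seminormal monoid such that $A_{\mathrm{red}}\to A_{\mathrm{sn}}$ is injective and every $b\in A_{\mathrm{sn}}$ has $b^n\in A_{\mathrm{red}}$ for all $n\gg0$, where $A_{\mathrm{red}}$ is $A$ modulo $a\sim b$ iff $a^n=b^n$ for $n\gg0$. *)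

(* Defs.v *)
From Stdlib Require Import List Arith.
Import ListNotations.

Record pmonoid := PMonoid {
  carrier :> Type;
  mul : carrier -> carrier -> carrier;
  one : carrier;
  zero : carrier;
  mulA : forall a b c, mul a (mul b c) = mul (mul a b) c;
  mulC : forall a b, mul a b = mul b a;
  mul1m : forall a, mul one a = a;
  mul0m : forall a, mul zero a = zero
}.
Arguments mul {p} _ _.
Arguments one {p}.
Arguments zero {p}.

Fixpoint pow {M : pmonoid} (a : M) (n : nat) : M :=
  match n with O => one | S k => mul a (pow a k) end.

Definition prodl {M : pmonoid} (t : list M) : M := fold_right mul one t.

Definition is_morph {A B : pmonoid} (f : A -> B) : Prop :=
  (forall a b, f (mul a b) = mul (f a) (f b)) /\ f one = one /\ f zero = zero.

Definition cancellative (C : pmonoid) : Prop :=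
  forall a b c : C, mul a c = mul b c -> c <> zero -> a = b.

Definition is_ideal {C : pmonoid} (I : C -> Prop) : Prop :=
  I zero /\ forall a c, I a -> I (mul c a).

(** pc: A is isomorphic to C/I, with C cancellative and I an ideal; i.e. there is
    a surjective morphism C -> A whose fibres are I and the singletons outside I. *)
Definition is_pc (A : pmonoid) : Prop :=
  exists (C : pmonoid) (I : C -> Prop) (pi : C -> A),
    cancellative C /\ is_ideal I /\ is_morph pi /\
    (forall x : A, exists c, pi c = x) /\
    (forall a b : C, pi a = pi b <-> (a = b \/ (I a /\ I b))).

Definition fin_gen (A : pmonoid) : Prop :=
  exists gens : list A, forall a : A,
    a = zero \/ exists t : list A, (forall x, In x t -> In x gens) /\ a = prodl t.

Definition reduced (M : pmonoid) : Prop :=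
  forall a b : M, pow a 2 = pow b 2 -> pow a 3 = pow b 3 -> a = b.

Definition seminormal (M : pmonoid) : Prop :=
  reduced M /\
  forall x y : M, pow x 3 = pow y 2 -> exists z, x = pow z 2 /\ y = pow z 3.

(** a ~ b in A_red: a^n = b^n for all n >> 0. *)
Definition red_eq {A : pmonoid} (a b : A) : Prop :=
  exists N, forall n, N <= n -> pow a n = pow b n.

(** phi : A -> S is a seminormalization of A: S seminormal, the induced map
    A_red -> S injective, and every b in S has b^n in the image for n >> 0. *)
Definition is_seminormalization {A S : pmonoid} (phi : A -> S) : Prop :=
  is_morph phi /\ seminormal S /\
  (forall a b : A, phi a = phi b -> red_eq a b) /\
  (forall b : S, exists N, forall n, N <= n -> exists a : A, phi a = pow b n).

Definition finite_morph {A B : pmonoid} (f : A -> B) : Prop :=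
  exists bs : list B, forall b : B,
    exists a : A, exists bi, In bi bs /\ b = mul (f a) bi.

(* Main.v *)
Require Import Defs.
From Stdlib Require Import List Arith Lia ZArith Bool Classical ClassicalEpsilon FunctionalExtensionality.
Import ListNotations.

Section Gen.
Variable M : pmonoid.

Lemma mulm1 (a : M) : mul a one = a.
Proof. rewrite mulC. apply mul1m. Qed.
Lemma mulm0 (a : M) : mul a zero = zero.
Proof. rewrite mulC. apply mul0m. Qed.
Lemma mulAC (a b c : M) : mul (mul a b) c = mul (mul a c) b.
Proof. rewrite <- !mulA. f_equal. apply mulC. Qed.
Lemma mulCA (a b c : M) : mul a (mul b c) = mul b (mul a c).
Proof. rewrite !mulA. f_equal. apply mulC. Qed.
Lemma mul4 (a b c d : M) : mul (mul a b) (mul c d) = mul (mul a c) (mul b d).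
Proof. rewrite <- !mulA. f_equal. apply mulCA. Qed.

Lemma pow_add (a : M) m n : pow a (m + n) = mul (pow a m) (pow a n).
Proof. induction m; simpl. now rewrite mul1m. now rewrite IHm, mulA. Qed.
Lemma pow1 (a : M) : pow a 1 = a.
Proof. simpl. apply mulm1. Qed.
Lemma pow_mulb (a b : M) n : pow (mul a b) n = mul (pow a n) (pow b n).
Proof. induction n; simpl. now rewrite mul1m. rewrite IHn. apply mul4. Qed.
Lemma pow_pow (a : M) m n : pow (pow a m) n = pow a (m * n).
Proof. induction n; simpl. now rewrite Nat.mul_0_r.
  rewrite IHn. replace (m * S n) with (m + m * n) by lia. now rewrite pow_add. Qed.
Lemma pow_one n : pow (@one M) n = one.
Proof. induction n; simpl; auto. now rewrite IHn, mul1m. Qed.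
Lemma pow_zero n : pow (@zero M) (S n) = zero.
Proof. simpl. apply mul0m. Qed.

Lemma red_powers (HR : reduced M) (u v : M) J :
  (forall j, S J <= j -> pow u j = pow v j) -> u = v.
Proof.
  revert u v. induction J; intros u v H.
  - rewrite <- (pow1 u), <- (pow1 v). apply H; lia.
  - apply IHJ. intros j Hj.
    destruct (Nat.eq_dec j (S J)) as [->|Hne]; [|apply H; lia].
    apply HR; rewrite !pow_pow; apply H; lia.
Qed.

Lemma red_nz (HR : reduced M) (u : M) n : u <> zero -> pow u (S n) <> zero.
Proof.
  intros Hu Hp. apply Hu. apply (red_powers HR _ _ n). intros j Hj.
  destruct j; [lia|]. rewrite pow_zero.
  replace (S j) with (S n + (S j - S n)) by lia. rewrite pow_add, Hp.
  apply mul0m.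
Qed.

Lemma two_consec (u v : M) p : pow u p = pow v p -> pow u (S p) = pow v (S p) ->
  forall j, p * p <= j -> pow u j = pow v j.
Proof.
  intros H1 H2 j Hj. destruct p.
  - simpl in H2. rewrite !mulm1 in H2. now subst.
  - set (q := j / S p). set (r := j mod S p).
    assert (Hj' : j = S p * q + r) by (apply Nat.div_mod; lia).
    assert (r < S p) by (apply Nat.mod_upper_bound; lia).
    assert (S p <= q).
    { apply Nat.div_le_lower_bound; lia. }
    replace j with (S p * (q - r) + S (S p) * r) by nia.
    rewrite !pow_add, <- !pow_pow, H1, H2. reflexivity.
Qed.

End Gen.

Definition leC {X} (cs : list (X -> nat)) (y x : X) := forall c, In c cs -> c y <= c x.

Definition covers {X} (cs : list (X -> nat)) (P Q : X -> Prop) (L : list X) :=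
  (forall y, In y L -> P y) /\ forall x, Q x -> exists y, In y L /\ leC cs y x.

Lemma union_cover {X A} (cs : list (X -> nat)) (l : list A) (P : X -> Prop) (Q : A -> X -> Prop) :
  (forall a, In a l -> exists L, covers cs P (Q a) L) ->
  exists L, covers cs P (fun x => exists a, In a l /\ Q a x) L.
Proof.
  induction l as [|a l IH]; intros H.
  - exists []. split; [simpl; tauto|]. intros x [a [[] _]].
  - destruct (H a (or_introl eq_refl)) as [L1 [H1 H1']].
    destruct IH as [L2 [H2 H2']]. { intros; apply H; simpl; auto. }
    exists (L1 ++ L2). split.
    + intros y Hy. apply in_app_or in Hy. destruct Hy; auto.
    + intros x [b [[<-|Hb] Hq]].
      * destruct (H1' x Hq) as [y [Hy Hle]]. exists y. split; auto. apply in_or_app; auto.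
      * destruct (H2' x (ex_intro _ b (conj Hb Hq))) as [y [Hy Hle]].
        exists y. split; auto. apply in_or_app; auto.
Qed.

Lemma dickson_n {X} n : forall (cs : list (X -> nat)) (P : X -> Prop), length cs <= n ->
  exists L, covers cs P P L.
Proof.
  induction n as [|n IH]; intros cs P Hlen.
  - destruct cs; [|simpl in Hlen; lia].
    destruct (classic (exists x, P x)) as [[p Hp]|Hn].
    + exists [p]. split. intros y [<-|[]]; auto.
      intros x _. exists p. split. now left. intros c [].
    + exists []. split. intros y []. intros x Hx. exfalso; eauto.
  - destruct (classic (exists x, P x)) as [[p Hp]|Hn].
    2:{ exists []. split. intros y []. intros x Hx. exfalso; eauto. }
    assert (Hcc : forall c, In c cs -> exists L, covers cs P (fun x => P x /\ c x < c p) L).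
    { intros c Hin. destruct (in_split _ _ Hin) as [l1 [l2 Heq]].
      assert (Hl : length (l1 ++ l2) <= n).
      { subst cs. rewrite length_app in *. simpl in Hlen. lia. }
      destruct (union_cover cs (seq 0 (c p)) P (fun t x => P x /\ c x = t)) as [L [HL HL']].
      { intros t _. destruct (IH (l1 ++ l2) (fun x => P x /\ c x = t) Hl) as [L [H1 H2]].
        exists L. split. intros y Hy; apply H1; auto.
        intros x Hx. destruct (H2 x Hx) as [y [Hy Hle]]. exists y. split; auto.
        intros c' Hc'. subst cs. apply in_app_or in Hc'. destruct Hc' as [Hc'|[<-|Hc']].
        - apply Hle. apply in_or_app; auto.
        - destruct (H1 y Hy) as [_ E1]. destruct Hx as [_ E2]. lia.
        - apply Hle. apply in_or_app; auto. }
      exists L. split; auto. intros x [Px Hlt]. apply HL'. exists (c x). split; auto.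
      apply in_seq. lia. }
    destruct (union_cover cs cs P (fun c x => P x /\ c x < c p) Hcc) as [L [HL HL']].
    exists (p :: L). split.
    + intros y [<-|Hy]; auto.
    + intros x Px. destruct (classic (leC cs p x)) as [Hle|Hnle].
      * exists p. split; auto. now left.
      * assert (exists c, In c cs /\ c x < c p) as [c [Hc1 Hc2]].
        { apply NNPP. intro Hno. apply Hnle. intros c Hc. apply NNPP. intro Hlt.
          apply Hno. exists c. split; auto. lia. }
        destruct (HL' x) as [y [Hy Hle]]. exists c. auto.
        exists y. split; auto. now right.
Qed.

Lemma dickson {X} (cs : list (X -> nat)) (P : X -> Prop) : exists L, covers cs P P L.
Proof. apply (dickson_n (length cs)). lia. Qed.

Lemma list_choice {A B} (l : list A) (R : A -> B -> Prop) :
  (forall a, In a l -> exists b, R a b) -> exists lb, forall a, In a l -> exists b, In b lb /\ R a b.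
Proof.
  induction l as [|a l IH]; intros H.
  - exists []. intros a [].
  - destruct (H a (or_introl eq_refl)) as [b Hb]. destruct IH as [lb Hlb].
    { intros; apply H; simpl; auto. }
    exists (b :: lb). intros a' [<-|Ha'].
    + exists b; simpl; auto.
    + destruct (Hlb a' Ha') as [b' [? ?]]. exists b'; simpl; auto.
Qed.

Definition vadd (u v : nat -> nat) : nat -> nat := fun i => u i + v i.
Definition vscale (m : nat) (u : nat -> nat) : nat -> nat := fun i => m * u i.
Definition vzero : nat -> nat := fun _ => 0.

Fixpoint psiG {M : pmonoid} (h : nat -> M) (n : nat) (u : nat -> nat) : M :=
  match n with 0 => one | S n => mul (pow (h n) (u n)) (psiG h n u) end.

Section PsiG.
Variable M : pmonoid.
Variable h : nat -> M.

Lemma psiG_add n u v : psiG h n (vadd u v) = mul (psiG h n u) (psiG h n v).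
Proof. induction n; simpl. now rewrite mul1m. rewrite IHn. unfold vadd. rewrite pow_add. apply mul4. Qed.
Lemma psiG_zero n : psiG h n vzero = one.
Proof. induction n; simpl; auto. rewrite IHn. apply mul1m. Qed.
Lemma psiG_scale n m u : psiG h n (vscale m u) = pow (psiG h n u) m.
Proof. induction n; simpl. now rewrite pow_one. rewrite IHn. unfold vscale.
  rewrite pow_mulb, pow_pow, Nat.mul_comm. reflexivity. Qed.
Lemma psiG_ext n u v : (forall i, i < n -> u i = v i) -> psiG h n u = psiG h n v.
Proof. induction n; simpl; intros H; auto. rewrite H by lia. rewrite IHn; auto. Qed.
Lemma psiG_delta n j : j < n -> psiG h n (fun i => if Nat.eqb i j then 1 else 0) = h j.
Proof.
  induction n as [|n IHn]; intros Hj; [lia|]. simpl. destruct (Nat.eqb_spec n j).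
  - subst. rewrite pow1. rewrite (psiG_ext j _ vzero), psiG_zero. apply mulm1.
    intros i Hi. destruct (Nat.eqb_spec i j); [lia|auto].
  - rewrite IHn by lia. simpl. apply mul1m.
Qed.
End PsiG.

Lemma morph_pow {A B : pmonoid} (f : A -> B) : is_morph f -> forall a n, f (pow a n) = pow (f a) n.
Proof. intros [Hm [H1 _]] a n. induction n; simpl; auto. rewrite Hm, IHn. auto. Qed.

Section Main.
Variables (A B : pmonoid) (phi : A -> B).
Hypotheses (Hpc : is_pc A) (Hmor : is_morph phi) (Hsn : seminormal B)
  (Hinj : forall a b, phi a = phi b -> red_eq a b)
  (Hpw : forall b : B, exists N, forall n, N <= n -> exists a, phi a = pow b n).

Lemma HR : reduced B. Proof. exact (proj1 Hsn). Qed.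

Lemma key_n n (x y z : B) a a' c : 1 <= n -> phi a = pow x n -> phi a' = pow y n -> phi c = pow z n ->
  mul x z = mul y z -> mul x z <> zero ->
  exists M, forall m, M <= m -> pow x (n * m) = pow y (n * m).
Proof.
  intros Hn Ha Ha' Hc Hxy Hnz.
  destruct Hmor as [Hm [H1 H0]].
  destruct (Hinj (mul a c) (mul a' c)) as [M0 HM].
  { rewrite !Hm, Ha, Ha', Hc, <- !pow_mulb, Hxy. reflexivity. }
  exists (S M0). intros m Hmm.
  destruct Hpc as [C [I [pi [Hcan [[HI0 HIm] [[Hpm [Hp1 Hp0]] [Hsurj Hfib]]]]]]].
  destruct (Hsurj a) as [al Hal]. destruct (Hsurj a') as [al' Hal']. destruct (Hsurj c) as [ga Hga].
  assert (Hnz2 : phi (pow (mul a c) m) <> zero).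
  { rewrite morph_pow by auto. rewrite Hm, Ha, Hc, <- pow_mulb, pow_pow.
    replace (n * m) with (S (n * m - 1)) by nia. apply red_nz; auto. apply HR. }
  assert (HnI : forall t, pi t = pow (mul a c) m -> ~ I t).
  { intros t Ht HIt. apply Hnz2. rewrite <- Ht.
    assert (pi t = pi zero) as E by (apply Hfib; auto). rewrite E, Hp0. auto. }
  assert (Eac : pi (pow (mul al ga) m) = pow (mul a c) m).
  { rewrite (morph_pow pi) by (split; auto). rewrite Hpm, Hal, Hga. auto. }
  assert (Ea'c : pi (pow (mul al' ga) m) = pow (mul a c) m).
  { rewrite (morph_pow pi) by (split; auto). rewrite Hpm, Hal', Hga. symmetry. apply HM. lia. }
  assert (Heq : pow (mul al ga) m = pow (mul al' ga) m).
  { destruct (proj1 (Hfib _ _) (eq_trans Eac (eq_sym Ea'c))) as [E|[E _]]; auto.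
    exfalso. exact (HnI _ Eac E). }
  rewrite !pow_mulb in Heq.
  assert (Hgz : pow ga m <> zero).
  { intro Hz. apply (HnI (pow (mul al ga) m)); auto. rewrite pow_mulb, Hz, mulm0. auto. }
  pose proof (Hcan _ _ _ Heq Hgz) as Heq2. clear Heq.
  rewrite <- !pow_pow, <- Ha, <- Ha'.
  rewrite <- !morph_pow by (split; auto). f_equal.
  rewrite <- Hal, <- Hal'. rewrite <- !(morph_pow pi) by (split; auto). now rewrite Heq2.
Qed.

Lemma canc (x y z : B) : mul x z = mul y z -> mul x z <> zero -> x = y.
Proof.
  intros Hxy Hnz.
  destruct (Hpw x) as [Nx HNx]. destruct (Hpw y) as [Ny HNy]. destruct (Hpw z) as [Nz HNz].
  set (N0 := S (Nx + Ny + Nz)).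
  destruct (HNx N0) as [a1 Ha1]; [lia|]. destruct (HNy N0) as [a1' Ha1']; [lia|].
  destruct (HNz N0) as [c1 Hc1]; [lia|].
  destruct (HNx (S N0)) as [a2 Ha2]; [lia|]. destruct (HNy (S N0)) as [a2' Ha2']; [lia|].
  destruct (HNz (S N0)) as [c2 Hc2]; [lia|].
  destruct (key_n N0 x y z a1 a1' c1) as [M1 HM1]; auto; [lia|].
  destruct (key_n (S N0) x y z a2 a2' c2) as [M2 HM2]; auto; [lia|].
  apply (red_powers _ HR _ _ (M1 + M2)). intros m Hm.
  apply (red_powers _ HR _ _ (N0 * N0)). intros j Hj.
  apply (two_consec _ _ _ N0); [| |lia]; rewrite !pow_pow, Nat.mul_comm; [apply HM1|apply HM2]; lia.
Qed.


Variable gens : list A.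
Hypothesis Hfg : forall a : A, a = zero \/ exists t : list A, (forall x, In x t -> In x gens) /\ a = prodl t.

Definition k := length gens.
Definition g (i : nat) : A := nth i gens one.
Definition psiA (u : nat -> nat) : A := psiG g k u.
Definition psi (u : nat -> nat) : B := phi (psiA u).

Lemma psi_add u v : psi (vadd u v) = mul (psi u) (psi v).
Proof. unfold psi, psiA. rewrite psiG_add. apply (proj1 Hmor). Qed.
Lemma psi_scale m u : psi (vscale m u) = pow (psi u) m.
Proof. unfold psi, psiA. rewrite psiG_scale. apply morph_pow; auto. Qed.
Lemma psi_ext u v : (forall i, i < k -> u i = v i) -> psi u = psi v.
Proof. intros H. unfold psi, psiA. f_equal. apply psiG_ext; auto. Qed.
Lemma psi_vzero : psi vzero = one.
Proof. unfold psi, psiA. rewrite psiG_zero. apply (proj1 (proj2 Hmor)). Qed.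

Definition delta (j : nat) : nat -> nat := fun i => if Nat.eqb i j then 1 else 0.

Lemma prodl_psi t : (forall x, In x t -> In x gens) -> exists e, prodl t = psiA e.
Proof.
  induction t as [|x t IH]; intros H.
  - exists vzero. unfold psiA. rewrite psiG_zero. reflexivity.
  - destruct IH as [e He]. { intros; apply H; simpl; auto. }
    destruct (In_nth gens x one (H x (or_introl eq_refl))) as [j [Hj Hx]].
    exists (vadd (delta j) e). unfold psiA. rewrite psiG_add. unfold delta. rewrite psiG_delta by exact Hj.
    simpl. rewrite He. unfold g. rewrite Hx. reflexivity.
Qed.

Definition restrk (e : nat -> nat) : nat -> nat := fun i => if i <? k then e i else 0.

Lemma pow_rep (b : B) n : (exists a, phi a = pow b n) ->
  pow b n = zero \/ exists e, pow b n = psi e /\ forall i, k <= i -> e i = 0.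
Proof.
  intros [a Ha]. destruct (Hfg a) as [->|[t [Ht ->]]].
  - left. rewrite <- Ha. apply (proj2 (proj2 Hmor)).
  - right. destruct (prodl_psi t Ht) as [e He]. exists (restrk e). split.
    + rewrite <- Ha, He. fold (psi e). apply psi_ext. intros i Hi. unfold restrk.
      destruct (Nat.ltb_spec i k); lia.
    + intros i Hi. unfold restrk. destruct (Nat.ltb_spec i k); lia.
Qed.

Definition supp (F : nat -> bool) (u : nat -> nat) := forall i, F i = false -> u i = 0.
Definition ind (F : nat -> bool) : nat -> nat := fun i => if F i then 1 else 0.
Definition face (F : nat -> bool) := (forall i, F i = true -> i < k) /\ psi (ind F) <> zero.

Lemma bound_ex (u : nat -> nat) n : exists m, forall i, i < n -> u i <= m.
Proof.
  induction n as [|n [m Hm]]. exists 0; intros; lia.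
  exists (m + u n). intros i Hi. destruct (Nat.eq_dec i n); [subst; lia|]. specialize (Hm i). lia.
Qed.

Lemma mul_nz_l (x y : B) : mul x y <> zero -> x <> zero.
Proof. intros H Hx. apply H. rewrite Hx. apply mul0m. Qed.

Lemma face_nz F u : face F -> supp F u -> psi u <> zero.
Proof.
  intros [HFk Hind] Hu. destruct (bound_ex u k) as [m Hm].
  assert (E : vscale (S m) (ind F) = vadd u (fun i => S m * ind F i - u i)).
  { apply functional_extensionality. intros i. unfold vscale, vadd, ind.
    destruct (F i) eqn:Fi.
    - specialize (HFk i Fi). specialize (Hm i HFk). lia.
    - rewrite (Hu i Fi). lia. }
  assert (Hn : psi (vscale (S m) (ind F)) <> zero).
  { rewrite psi_scale. apply red_nz; auto. apply HR. }
  rewrite E, psi_add in Hn. exact (mul_nz_l _ _ Hn).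
Qed.

Lemma supp_add F u v : supp F u -> supp F v -> supp F (vadd u v).
Proof. intros Hu Hv i Hi. unfold vadd. rewrite Hu, Hv; auto. Qed.
Lemma supp_scale F m u : supp F u -> supp F (vscale m u).
Proof. intros Hu i Hi. unfold vscale. rewrite Hu; auto. Qed.

Fixpoint sumn (n : nat) (f : nat -> nat) : nat := match n with 0 => 0 | S n => f n + sumn n f end.
Lemma sumn_ext n f f' : (forall i, i < n -> f i = f' i) -> sumn n f = sumn n f'.
Proof. induction n; simpl; intros H; auto. rewrite H, IHn; auto. Qed.
Lemma sumn_add n f f' : sumn n (fun i => f i + f' i) = sumn n f + sumn n f'.
Proof. induction n; simpl; auto. rewrite IHn. lia. Qed.
Lemma sumn_scale n m f : sumn n (fun i => m * f i) = m * sumn n f.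
Proof. induction n; simpl; auto. rewrite IHn. lia. Qed.
Lemma sumn_zero n : sumn n (fun _ => 0) = 0.
Proof. induction n; simpl; auto. Qed.
Lemma sumn_le n f f' : (forall i, i < n -> f i <= f' i) -> sumn n f <= sumn n f'.
Proof. induction n; simpl; intros H; auto. pose proof (H n ltac:(lia)). assert (sumn n f <= sumn n f') by (apply IHn; intros; apply H; lia). lia. Qed.

Definition indep (J : nat -> bool) := forall u v, supp J u -> supp J v -> psi u = psi v -> u = v.

Section Lin.
Variables (F J : nat -> bool) (D : nat) (al be : nat -> nat -> nat).
Hypotheses (HF : face F) (HJF : forall i, J i = true -> F i = true) (HJ : indep J) (HD : 1 <= D)
  (Hal : forall i, supp J (al i)) (Hbe : forall i, supp J (be i))
  (Hrel : forall i, i < k -> F i = true -> J i = false ->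
     psi (vadd (vscale D (delta i)) (al i)) = psi (be i)).

Definition isrel i := F i && negb (J i).
Definition Pv (e : nat -> nat) : nat -> nat := fun j => sumn k (fun i => if isrel i then e i * al i j else 0).
Definition Qv (e : nat -> nat) : nat -> nat :=
  fun j => D * (if J j then e j else 0) + sumn k (fun i => if isrel i then e i * be i j else 0).
Definition Ceq u v := forall j, Qv u j + Pv v j = Qv v j + Pv u j.

Lemma supp_JF u : supp J u -> supp F u.
Proof. intros H i Hi. apply H. destruct (J i) eqn:E; auto. rewrite (HJF i E) in Hi. discriminate. Qed.

Lemma Pv_supp e : supp J (Pv e).
Proof. intros j Hj. unfold Pv. rewrite (sumn_ext _ _ (fun _ => 0)). apply sumn_zero.
  intros i _. destruct (isrel i); auto. rewrite (Hal i j Hj). lia. Qed.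
Lemma Qv_supp e : supp J (Qv e).
Proof. intros j Hj. unfold Qv. rewrite Hj. rewrite (sumn_ext _ _ (fun _ => 0)). rewrite sumn_zero; lia.
  intros i _. destruct (isrel i); auto. rewrite (Hbe i j Hj). lia. Qed.

Lemma Pv_add u v : Pv (vadd u v) = vadd (Pv u) (Pv v).
Proof. apply functional_extensionality; intro j. unfold Pv, vadd. rewrite <- sumn_add.
  apply sumn_ext. intros i _. destruct (isrel i); lia. Qed.
Lemma Qv_add u v : Qv (vadd u v) = vadd (Qv u) (Qv v).
Proof. apply functional_extensionality; intro j. unfold Qv, vadd.
  assert (E : sumn k (fun i => if isrel i then (u i + v i) * be i j else 0) =
    sumn k (fun i => if isrel i then u i * be i j else 0) + sumn k (fun i => if isrel i then v i * be i j else 0)).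
  { rewrite <- sumn_add. apply sumn_ext. intros i _. destruct (isrel i); lia. }
  rewrite E. destruct (J j); lia. Qed.
Lemma Pv_scale m u : Pv (vscale m u) = vscale m (Pv u).
Proof. apply functional_extensionality; intro j. unfold Pv, vscale. rewrite <- sumn_scale.
  apply sumn_ext. intros i _. destruct (isrel i); lia. Qed.
Lemma Qv_scale m u : Qv (vscale m u) = vscale m (Qv u).
Proof. apply functional_extensionality; intro j. unfold Qv, vscale.
  assert (E : sumn k (fun i => if isrel i then (m * u i) * be i j else 0) =
    m * sumn k (fun i => if isrel i then u i * be i j else 0)).
  { rewrite <- sumn_scale. apply sumn_ext. intros i _. destruct (isrel i); lia. }
  rewrite E. destruct (J j); lia. Qed.

Definition en (e : nat -> nat) n : nat -> nat := fun i => if (i <? n) && isrel i then e i else 0.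
Definition Pn (e : nat -> nat) n : nat -> nat := fun j => sumn n (fun i => if isrel i then e i * al i j else 0).
Definition Rn (e : nat -> nat) n : nat -> nat := fun j => sumn n (fun i => if isrel i then e i * be i j else 0).

Lemma L1n e n : n <= k -> psi (vadd (vscale D (en e n)) (Pn e n)) = psi (Rn e n).
Proof.
  induction n as [|n IH]; intros Hn.
  - apply psi_ext. intros i _. unfold vadd, vscale, en, Pn, Rn. simpl. lia.
  - destruct (isrel n) eqn:Hr.
    + assert (E1 : vadd (vscale D (en e (S n))) (Pn e (S n)) =
         vadd (vadd (vscale D (en e n)) (Pn e n)) (vscale (e n) (vadd (vscale D (delta n)) (al n)))).
      { apply functional_extensionality. intro i. unfold vadd, vscale, en, Pn, delta. simpl.
        rewrite Hr. destruct (Nat.ltb_spec i (S n)), (Nat.ltb_spec i n), (Nat.eqb_spec i n); subst;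
          try rewrite Hr; simpl; try lia; destruct (isrel i); lia. }
      assert (E2 : Rn e (S n) = vadd (Rn e n) (vscale (e n) (be n))).
      { apply functional_extensionality. intro j. unfold Rn, vadd, vscale. simpl. rewrite Hr. lia. }
      rewrite E1, E2, psi_add, IH by lia. rewrite psi_add, !psi_scale.
      unfold isrel in Hr. apply andb_true_iff in Hr. destruct Hr as [Hr1 Hr2]. apply negb_true_iff in Hr2.
      rewrite Hrel by (auto; lia). reflexivity.
    + assert (E1 : vadd (vscale D (en e (S n))) (Pn e (S n)) = vadd (vscale D (en e n)) (Pn e n)).
      { apply functional_extensionality. intro i. unfold vadd, vscale, en, Pn. simpl.
        rewrite Hr. destruct (Nat.ltb_spec i (S n)), (Nat.ltb_spec i n); simpl; try lia.
        assert (i = n) by lia. subst. rewrite Hr. simpl. lia. }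
      assert (E2 : Rn e (S n) = Rn e n).
      { apply functional_extensionality. intro j. unfold Rn. simpl. rewrite Hr. lia. }
      rewrite E1, E2. apply IH. lia.
Qed.

Lemma L1 e : supp F e -> psi (vadd (vscale D e) (Pv e)) = psi (Qv e).
Proof.
  intros He.
  set (rJ := fun i => if J i then e i else 0).
  assert (E1 : vadd (vscale D e) (Pv e) = vadd (vscale D rJ) (vadd (vscale D (en e k)) (Pn e k))).
  { apply functional_extensionality. intro i. unfold vadd, vscale, rJ, en, Pn, Pv. unfold isrel.
    destruct (J i) eqn:Ji; simpl; rewrite ?andb_false_r; try lia.
    destruct (F i) eqn:Fi; simpl.
    - pose proof (proj1 HF i Fi). destruct (Nat.ltb_spec i k); [|lia]. simpl. lia.
    - rewrite (He i Fi). rewrite andb_false_r. lia. }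
  assert (E2 : Qv e = vadd (vscale D rJ) (Rn e k)).
  { apply functional_extensionality. intro j. unfold Qv, vadd, vscale, rJ, Rn. reflexivity. }
  rewrite E1, E2, psi_add, L1n, psi_add; auto.
Qed.

Lemma L2 u v : supp F u -> supp F v -> psi u = psi v -> Ceq u v.
Proof.
  intros Hu Hv Huv.
  assert (E : psi (vadd (Qv u) (Pv v)) = psi (vadd (Qv v) (Pv u))).
  { rewrite !psi_add, <- !L1 by auto. rewrite !psi_add, !psi_scale, Huv. apply mulAC. }
  apply HJ in E; try (apply supp_add; auto using Qv_supp, Pv_supp).
  intro j. exact (equal_f E j).
Qed.

Lemma L3 u v : Ceq u v -> supp F u -> supp F v -> psi (vscale D u) = psi (vscale D v).
Proof.
  intros Hc Hu Hv.
  assert (E : vadd (Qv u) (Pv v) = vadd (Qv v) (Pv u)).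
  { apply functional_extensionality. intro j. apply Hc. }
  assert (H : mul (psi (vscale D u)) (psi (vadd (Pv u) (Pv v))) = mul (psi (vscale D v)) (psi (vadd (Pv u) (Pv v)))).
  { rewrite !psi_add. rewrite mulA, <- psi_add, L1 by auto.
    rewrite <- psi_add, E, psi_add, <- L1 by auto. rewrite psi_add. rewrite mulA. apply mulAC. }
  apply (canc _ _ _ H). rewrite <- psi_add. apply (face_nz F); auto.
  apply supp_add; [apply supp_scale; auto|]. apply supp_JF. apply supp_add; auto using Pv_supp.
Qed.

Definition Cz (u : nat -> nat) (j : nat) : Z := (Z.of_nat (Qv u j) - Z.of_nat (Pv u j))%Z.

Lemma Ceq_Cz u v : Ceq u v <-> forall j, Cz u j = Cz v j.
Proof. unfold Ceq, Cz. split; intros H j; specialize (H j); lia. Qed.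

Lemma Cz_add u v j : Cz (vadd u v) j = (Cz u j + Cz v j)%Z.
Proof. unfold Cz. rewrite Qv_add, Pv_add. unfold vadd. lia. Qed.
Lemma Cz_scale m u j : Cz (vscale m u) j = (Z.of_nat m * Cz u j)%Z.
Proof. unfold Cz. rewrite Qv_scale, Pv_scale. unfold vscale. lia. Qed.

Definition Kb (j : nat) : nat := D + sumn k (fun i => al i j + be i j).

Lemma Cz_bound r m j : (forall i, r i <= m) -> (Z.abs (Cz r j) <= Z.of_nat (m * Kb j))%Z.
Proof.
  intros Hr.
  assert (H1 : Pv r j <= m * sumn k (fun i => al i j + be i j)).
  { unfold Pv. rewrite <- sumn_scale. apply sumn_le. intros i _. destruct (isrel i); [|lia].
    specialize (Hr i). nia. }
  assert (H2 : sumn k (fun i => if isrel i then r i * be i j else 0) <= m * sumn k (fun i => al i j + be i j)).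
  { rewrite <- sumn_scale. apply sumn_le. intros i _. destruct (isrel i); [|lia].
    specialize (Hr i). nia. }
  assert (H3 : D * (if J j then r j else 0) <= D * m).
  { destruct (J j); [specialize (Hr j)|]; nia. }
  unfold Cz, Qv, Kb. nia.
Qed.

Definition box (u v : nat -> nat) := forall j, (Z.abs (Cz u j - Cz v j) <= Z.of_nat (Kb j))%Z.

Lemma decomp (b : B) N e e' : 1 <= N -> pow b N = psi e -> pow b (S N) = psi e' ->
  supp F e -> supp F e' ->
  exists q u v, supp F q /\ supp F u /\ supp F v /\ mul b (psi v) = psi (vadd q u) /\ box u v.
Proof.
  intros HN He He' Hse Hse'.
  set (q := fun i => e i / N). set (r := fun i => e i mod N).
  assert (Hq : supp F q). { intros i Hi. unfold q. rewrite (Hse i Hi). apply Nat.Div0.div_0_l. }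
  assert (Er : e = vadd (vscale N q) r).
  { apply functional_extensionality. intro i. unfold vadd, vscale, q, r. apply Nat.div_mod. lia. }
  exists q, e', (vadd e q). split; [auto|]. split; [auto|]. split; [apply supp_add; auto|]. split.
  - rewrite psi_add, mulA, <- He. change (mul b (pow b N)) with (pow b (S N)).
    rewrite He', <- psi_add. f_equal. apply functional_extensionality. intro; unfold vadd; lia.
  - assert (HC : Ceq (vscale (S N) e) (vscale N e')).
    { apply L2; try apply supp_scale; auto. rewrite !psi_scale, <- He, <- He', !pow_pow.
      f_equal. lia. }
    rewrite Ceq_Cz in HC. intro j. specialize (HC j). rewrite !Cz_scale in HC.
    rewrite Cz_add. rewrite Er in HC |- *. rewrite !Cz_add, !Cz_scale in *.
    pose proof (Cz_bound r (N - 1) j) as Hb.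
    assert (Hb' : (Z.abs (Cz r j) <= Z.of_nat (N - 1) * Z.of_nat (Kb j))%Z).
    { rewrite <- Nat2Z.inj_mul. apply Hb. intro i. unfold r.
      pose proof (Nat.mod_upper_bound (e i) N ltac:(lia)). lia. }
    clear Hb. rewrite Nat2Z.inj_sub in Hb' by lia. simpl in Hb'.
    set (x := Cz q j) in *. set (y := Cz r j) in *. set (z := Cz e' j) in *.
    assert (0 <= Z.of_nat (Kb j))%Z by lia.
    rewrite Nat2Z.inj_succ in HC.
    assert (Hw : (Z.of_nat N * (z - (Z.of_nat N * x + y + x)) = y)%Z) by nia.
    nia.
Qed.

Definition pr := ((nat -> nat) * (nat -> nat))%type.
Definition approx (h t : pr) := psi (vadd (fst h) (snd t)) = psi (vadd (snd h) (fst t)).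
Definition suppP (h : pr) := supp F (fst h) /\ supp F (snd h).
Definition padd (h t : pr) : pr := (vadd (fst h) (fst t), vadd (snd h) (snd t)).
Definition pscale c (h : pr) : pr := (vscale c (fst h), vscale c (snd h)).
Definition pzero : pr := (vzero, vzero).

Lemma F_out i : k <= i -> F i = false.
Proof. intros Hi. destruct (F i) eqn:E; auto. pose proof (proj1 HF i E). lia. Qed.
Lemma supp_out u i : supp F u -> k <= i -> u i = 0.
Proof. intros Hu Hi. apply Hu, F_out, Hi. Qed.

Lemma vadd_comm u v : vadd u v = vadd v u.
Proof. apply functional_extensionality; intro; unfold vadd; lia. Qed.

Lemma approx_refl h : approx h h.
Proof. unfold approx. now rewrite vadd_comm. Qed.
Lemma approx_sym h t : approx h t -> approx t h.
Proof. unfold approx. intros H. rewrite vadd_comm, <- H, vadd_comm. reflexivity. Qed.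

Lemma approx_trans x y z : suppP x -> suppP y -> suppP z -> approx x y -> approx y z -> approx x z.
Proof.
  intros [Hx1 Hx2] [Hy1 Hy2] [Hz1 Hz2]. unfold approx. intros H1 H2.
  apply (canc _ _ (psi (vadd (fst y) (snd y)))).
  - rewrite !psi_add in *.
    set (a := psi (fst x)) in *. set (b := psi (snd x)) in *. set (c := psi (fst y)) in *.
    set (d := psi (snd y)) in *. set (e := psi (fst z)) in *. set (f := psi (snd z)) in *.
    transitivity (mul (mul a d) (mul c f)).
    { rewrite (mul4 _ a f c d), (mul4 _ a d c f), (mulC _ f d). reflexivity. }
    rewrite H1, H2, (mulC _ d e), mul4. reflexivity.
  - rewrite <- psi_add. apply (face_nz F); auto. repeat apply supp_add; auto.
Qed.

Lemma approx_padd m x y : approx x y -> approx (padd m x) (padd m y).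
Proof.
  unfold approx, padd; simpl. intros H.
  assert (E1 : vadd (vadd (fst m) (fst x)) (vadd (snd m) (snd y)) = vadd (vadd (fst m) (snd m)) (vadd (fst x) (snd y))).
  { apply functional_extensionality; intro; unfold vadd; lia. }
  assert (E2 : vadd (vadd (snd m) (snd x)) (vadd (fst m) (fst y)) = vadd (vadd (fst m) (snd m)) (vadd (snd x) (fst y))).
  { apply functional_extensionality; intro; unfold vadd; lia. }
  rewrite E1, E2, !(psi_add (vadd (fst m) (snd m))), H. reflexivity.
Qed.

Lemma approx_eq x x' y : x = x' -> approx x' y -> approx x y.
Proof. intros ->; auto. Qed.

Lemma approx_eq_r x y y' : y = y' -> approx x y' -> approx x y.
Proof. intros ->; auto. Qed.

Lemma pr_eq (x y : pr) : (forall i, fst x i = fst y i) -> (forall i, snd x i = snd y i) -> x = y.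
Proof. destruct x, y; simpl; intros H1 H2. f_equal; apply functional_extensionality; auto. Qed.

Definition H0 (h : pr) := suppP h /\ Ceq (fst h) (snd h).

Lemma approx_Dm m : H0 m -> approx (pscale D m) pzero.
Proof.
  intros [[H1 H2] Hc]. unfold approx, pscale, pzero; simpl.
  assert (E : forall u, vadd u vzero = u).
  { intro u; apply functional_extensionality; intro; unfold vadd, vzero; lia. }
  rewrite !E. apply L3; auto.
Qed.

Fixpoint combos (l : list pr) : list pr :=
  match l with
  | [] => [pzero]
  | m :: l' => flat_map (fun t => map (fun c => padd (pscale c m) t) (seq 0 D)) (combos l')
  end.

Lemma in_combos m l t c : In t (combos l) -> c < D -> In (padd (pscale c m) t) (combos (m :: l)).
Proof. intros Ht Hc. simpl. apply in_flat_map. exists t. split; auto. apply in_map_iff. exists c. split; auto. apply in_seq. lia. Qed.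

Lemma combos_inv m l t : In t (combos (m :: l)) -> exists t0 c, In t0 (combos l) /\ c < D /\ t = padd (pscale c m) t0.
Proof. simpl. intros Ht. apply in_flat_map in Ht. destruct Ht as [t0 [Ht0 Hin]].
  apply in_map_iff in Hin. destruct Hin as [c [<- Hc]]. apply in_seq in Hc. exists t0, c. split; auto. split; auto. lia. Qed.

Lemma combos_supp l : (forall m, In m l -> suppP m) -> forall t, In t (combos l) -> suppP t.
Proof.
  induction l as [|m l IH]; intros Hl t Ht.
  - destruct Ht as [<-|[]]. split; intros i _; reflexivity.
  - destruct (combos_inv _ _ _ Ht) as [t0 [c [Ht0 [_ ->]]]].
    destruct (IH (fun m' H => Hl m' (or_intror H)) t0 Ht0) as [A1 A2].
    destruct (Hl m (or_introl eq_refl)) as [B1 B2].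
    split; simpl; apply supp_add; auto; apply supp_scale; auto.
Qed.

Lemma combos_zero l : In pzero (combos l).
Proof.
  induction l as [|m l IH]; simpl; auto.
  apply in_flat_map. exists pzero. split; auto. apply in_map_iff. exists 0. split.
  - apply pr_eq; intro i; simpl; unfold vadd, vscale, vzero; lia.
  - apply in_seq. lia.
Qed.

Lemma combos_closed l : (forall m, In m l -> H0 m) ->
  forall x t, In x l -> In t (combos l) -> exists t', In t' (combos l) /\ approx (padd x t) t'.
Proof.
  induction l as [|m l IH]; intros Hl x t Hx Ht; [destruct Hx|].
  destruct (combos_inv _ _ _ Ht) as [t0 [c [Ht0 [Hc ->]]]].
  destruct Hx as [<-|Hx].
  - destruct (Nat.eq_dec (S c) D) as [Ec|Ec].
    + exists (padd (pscale 0 m) t0). split. { apply in_combos; auto; lia. }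
      apply (approx_eq_r _ _ t0). { apply pr_eq; intro i; simpl; unfold vadd, vscale; lia. }
      apply (approx_eq _ (padd t0 (pscale D m))).
      { apply pr_eq; intro i; simpl; unfold vadd, vscale; nia. }
      apply (approx_eq_r _ _ (padd t0 pzero)).
      { apply pr_eq; intro i; simpl; unfold vadd, vzero; lia. }
      apply approx_padd, approx_Dm, Hl. now left.
    + exists (padd (pscale (S c) m) t0). split. apply in_combos; auto; lia.
      apply (approx_eq _ (padd (pscale (S c) m) t0)). 2: apply approx_refl.
      apply pr_eq; intro i; simpl; unfold vadd, vscale; nia.
  - destruct (IH (fun m' H => Hl m' (or_intror H)) x t0 Hx Ht0) as [t0' [Ht0' Ha]].
    exists (padd (pscale c m) t0'). split. apply in_combos; auto.
    apply (approx_eq _ (padd (pscale c m) (padd x t0))).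
    { apply pr_eq; intro i; simpl; unfold vadd, vscale; nia. }
    apply approx_padd; auto.
Qed.

Definition coordsP : list (pr -> nat) :=
  map (fun i (h : pr) => fst h i) (seq 0 k) ++ map (fun i (h : pr) => snd h i) (seq 0 k).

Lemma leC_app_l {X} (c1 c2 : list (X -> nat)) y x : leC (c1 ++ c2) y x -> leC c1 y x.
Proof. intros H c Hc. apply H. apply in_or_app; auto. Qed.
Lemma leC_app_r {X} (c1 c2 : list (X -> nat)) y x : leC (c1 ++ c2) y x -> leC c2 y x.
Proof. intros H c Hc. apply H. apply in_or_app; auto. Qed.

Lemma leC_coords y x : leC coordsP y x -> forall i, i < k -> fst y i <= fst x i /\ snd y i <= snd x i.
Proof.
  intros H i Hi. split.
  - apply (H (fun h : pr => fst h i)). apply in_or_app. left. apply in_map_iff. exists i. split; auto. apply in_seq. lia.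
  - apply (H (fun h : pr => snd h i)). apply in_or_app. right. apply in_map_iff. exists i. split; auto. apply in_seq. lia.
Qed.

Definition sz (h : pr) := sumn k (fun i => fst h i + snd h i).
Definition psub (h m : pr) : pr := (fun i => fst h i - fst m i, fun i => snd h i - snd m i).

Lemma sumn_zero_inv n f : sumn n f = 0 -> forall i, i < n -> f i = 0.
Proof. induction n; simpl; intros H i Hi; [lia|]. destruct (Nat.eq_dec i n); [subst; lia|]. apply IHn; lia. Qed.

Lemma suppP_padd x y : suppP x -> suppP y -> suppP (padd x y).
Proof. intros [? ?] [? ?]. split; simpl; apply supp_add; auto. Qed.
Lemma suppP_psub x y : suppP x -> suppP (psub x y).
Proof. intros [H1 H2]. split; intros i Hi; simpl; [rewrite H1|rewrite H2]; auto. Qed.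

Lemma padd_psub h m : suppP h -> suppP m -> (forall i, i < k -> fst m i <= fst h i /\ snd m i <= snd h i) ->
  h = padd m (psub h m).
Proof.
  intros [H1 H2] [M1 M2] Hle. apply pr_eq; intro i; simpl; unfold vadd;
  (destruct (Nat.lt_ge_cases i k) as [Hi|Hi]; [specialize (Hle i Hi); lia|]).
  - rewrite (supp_out (fst h)), (supp_out (fst m)); auto.
  - rewrite (supp_out (snd h)), (supp_out (snd m)); auto.
Qed.

Lemma H0_sub m d : H0 (padd m d) -> H0 m -> suppP d -> H0 d.
Proof.
  intros [_ Hc] [_ Hm] Hd. split; auto. apply Ceq_Cz. rewrite Ceq_Cz in Hc, Hm. intro j.
  specialize (Hc j). specialize (Hm j). simpl in Hc. rewrite !Cz_add in Hc. lia.
Qed.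

Lemma sz_padd m d : sz (padd m d) = sz m + sz d.
Proof. unfold sz. rewrite <- sumn_add. apply sumn_ext. intros i _. simpl. unfold vadd. lia. Qed.

Lemma tor_ex : exists Tor, (forall t, In t Tor -> suppP t) /\ forall h, H0 h -> exists t, In t Tor /\ approx h t.
Proof.
  destruct (dickson coordsP (fun h => H0 h /\ 0 < sz h)) as [M0 [HM0 HM0']].
  assert (HM0s : forall m, In m M0 -> H0 m) by (intros m Hm; apply HM0; auto).
  exists (combos M0). split.
  { apply combos_supp. intros m Hm. apply HM0s; auto. }
  assert (Main : forall n h, sz h <= n -> H0 h -> exists t, In t (combos M0) /\ approx h t).
  { induction n as [|n IH]; intros h Hs Hh.
    - assert (E : h = pzero).
      { destruct Hh as [[H1 H2] _]. apply pr_eq; intro i; simpl; unfold vzero;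
        (destruct (Nat.lt_ge_cases i k) as [Hi|Hi];
         [pose proof (sumn_zero_inv k (fun i => fst h i + snd h i) ltac:(unfold sz in Hs; lia) i Hi); simpl in *; lia|]).
        apply (supp_out (fst h)); auto. apply (supp_out (snd h)); auto. }
      exists pzero. split. apply combos_zero. rewrite E. apply approx_refl.
    - destruct (Nat.eq_dec (sz h) 0) as [Hz|Hz].
      { apply IH; auto. lia. }
      assert (Hpos : 0 < sz h) by lia. destruct (HM0' h (conj Hh Hpos)) as [m [Hm Hle]].
      destruct (HM0 m Hm) as [Hm0 Hmsz].
      pose proof (leC_coords _ _ Hle) as Hle'.
      assert (Eh : h = padd m (psub h m)) by (apply padd_psub; auto; [apply Hh|apply Hm0]).
      assert (Hd : H0 (psub h m)).
      { apply (H0_sub m); auto. rewrite <- Eh; auto. apply suppP_psub. apply Hh. }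
      assert (Hsd : sz (psub h m) <= n) by (rewrite Eh, sz_padd in Hs; lia).
      destruct (IH _ Hsd Hd) as [t0 [Ht0 Ha0]].
      destruct (combos_closed M0 HM0s m t0 Hm Ht0) as [t' [Ht' Ha']].
      exists t'. split; auto.
      assert (Hsc : forall t, In t (combos M0) -> suppP t) by (apply combos_supp; intros; apply HM0s; auto).
      apply (approx_trans _ (padd m t0)); auto.
      + apply Hh.
      + apply suppP_padd; auto. apply Hm0.
      + rewrite Eh at 1. apply approx_padd; auto. }
  intros h Hh. apply (Main (sz h)); auto.
Qed.

Lemma Cz_outJ u j : J j = false -> Cz u j = 0%Z.
Proof. intros Hj. unfold Cz. rewrite (Qv_supp u j Hj), (Pv_supp u j Hj). reflexivity. Qed.
Lemma J_out j : k <= j -> J j = false.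
Proof. intros Hj. destruct (J j) eqn:E; auto. pose proof (HJF j E) as E2. rewrite (F_out j Hj) in E2. discriminate. Qed.

Definition wv (h : pr) j := (Cz (fst h) j - Cz (snd h) j)%Z.
Definition coordsR : list (pr -> nat) := coordsP ++
  (map (fun j (h : pr) => Z.to_nat (Z.of_nat (Kb j) + wv h j)) (seq 0 k) ++
   map (fun j (h : pr) => Z.to_nat (Z.of_nat (Kb j) - wv h j)) (seq 0 k)).

Lemma R_ex : exists R, (forall r, In r R -> suppP r) /\
  forall h, suppP h -> box (fst h) (snd h) -> exists r, In r R /\ approx h r.
Proof.
  destruct tor_ex as [Tor [HT HT']].
  destruct (dickson coordsR (fun h => suppP h /\ box (fst h) (snd h))) as [M1 [HM1 HM1']].
  exists (flat_map (fun m => map (padd m) Tor) M1). split.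
  { intros r Hr. apply in_flat_map in Hr. destruct Hr as [m [Hm Hr]]. apply in_map_iff in Hr.
    destruct Hr as [t [<- Ht]]. apply suppP_padd; auto. apply HM1; auto. }
  intros h Hh Hb. destruct (HM1' h (conj Hh Hb)) as [m [Hm Hle]].
  destruct (HM1 m Hm) as [Hms Hmb].
  pose proof (leC_coords _ _ (leC_app_l _ _ _ _ Hle)) as Hle1.
  pose proof (leC_app_r _ _ _ _ Hle) as Hle2.
  assert (Hw : forall j, wv m j = wv h j).
  { intro j. destruct (Nat.lt_ge_cases j k) as [Hj|Hj].
    - assert (A1 : Z.to_nat (Z.of_nat (Kb j) + wv m j) <= Z.to_nat (Z.of_nat (Kb j) + wv h j)).
      { apply (Hle2 (fun h : pr => Z.to_nat (Z.of_nat (Kb j) + wv h j))). apply in_or_app. left.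
        apply in_map_iff. exists j. split; auto. apply in_seq. lia. }
      assert (A2 : Z.to_nat (Z.of_nat (Kb j) - wv m j) <= Z.to_nat (Z.of_nat (Kb j) - wv h j)).
      { apply (Hle2 (fun h : pr => Z.to_nat (Z.of_nat (Kb j) - wv h j))). apply in_or_app. right.
        apply in_map_iff. exists j. split; auto. apply in_seq. lia. }
      specialize (Hb j). specialize (Hmb j). unfold wv in *. lia.
    - unfold wv. rewrite !Cz_outJ by (apply J_out; auto). reflexivity. }
  assert (Eh : h = padd m (psub h m)) by (apply padd_psub; auto).
  assert (Hd : H0 (psub h m)).
  { split. apply suppP_psub; auto. apply Ceq_Cz. intro j. specialize (Hw j). unfold wv in Hw.
    pose proof (f_equal (fun x => Cz (fst x) j) Eh) as E1. pose proof (f_equal (fun x => Cz (snd x) j) Eh) as E2.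
    simpl in E1, E2 |- *. rewrite Cz_add in E1, E2. lia. }
  destruct (HT' _ Hd) as [t [Ht Ha]].
  exists (padd m t). split.
  - apply in_flat_map. exists m. split; auto. apply in_map; auto.
  - rewrite Eh at 1. apply approx_padd; auto.
Qed.

Lemma face_cover : exists bs : list B, forall b N e e', 1 <= N -> pow b N = psi e -> pow b (S N) = psi e' ->
  supp F e -> supp F e' -> exists a bi, In bi bs /\ b = mul (phi a) bi.
Proof.
  destruct R_ex as [R [HR1 HR2]].
  set (cs := map (fun i (x : (nat -> nat) * nat) => fst x i) (seq 0 k) ++
             [fun x : (nat -> nat) * nat => snd x; fun x : (nat -> nat) * nat => length R - snd x]).
  set (Wit := fun (x : (nat -> nat) * nat) (b0 : B) => exists u0 v0, supp F u0 /\ supp F v0 /\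
           mul b0 (psi v0) = psi (vadd (fst x) u0) /\ approx (u0, v0) (nth (snd x) R pzero)).
  destruct (dickson cs (fun x => supp F (fst x) /\ snd x < length R /\ exists b0, Wit x b0)) as [L [HL HL']].
  destruct (list_choice L Wit) as [bs Hbs].
  { intros x Hx. apply HL; auto. }
  exists bs. intros b N e e' HN He He' Hse Hse'.
  destruct (decomp b N e e' HN He He' Hse Hse') as [q [u [v [Hq [Hu [Hv [Hbv Hbox]]]]]]].
  destruct (HR2 (u, v) (conj Hu Hv) Hbox) as [r [Hr Har]].
  destruct (In_nth R r pzero Hr) as [idx [Hidx Hnth]].
  destruct (HL' (q, idx)) as [y [Hy Hle]].
  { split; auto. split; auto. exists b, u, v. split; auto. split; auto. split; auto. simpl. rewrite Hnth. auto. }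
  destruct (HL y Hy) as [Hy1 [Hy2 _]].
  assert (Hsy : snd y = idx).
  { assert (A1 := Hle (fun x : (nat -> nat) * nat => snd x) ltac:(apply in_or_app; right; simpl; auto)).
    assert (A2 := Hle (fun x : (nat -> nat) * nat => length R - snd x) ltac:(apply in_or_app; right; simpl; auto)).
    simpl in A1, A2. lia. }
  assert (Hq' : forall i, i < k -> fst y i <= q i).
  { intros i Hi. apply (Hle (fun x : (nat -> nat) * nat => fst x i)). apply in_or_app. left.
    apply in_map_iff. exists i. split; auto. apply in_seq. lia. }
  destruct (Hbs y Hy) as [b0 [Hb0 [u0 [v0 [Hu0 [Hv0 [Hbv0 Ha0]]]]]]].
  rewrite Hsy, Hnth in Ha0.
  assert (Hap : approx (u, v) (u0, v0)).
  { apply (approx_trans _ r); auto. split; auto. split; auto. apply approx_sym; auto. }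
  unfold approx in Hap; simpl in Hap.
  exists (psiA (fun i => q i - fst y i)), b0. split; auto.
  change (phi (psiA (fun i => q i - fst y i))) with (psi (fun i => q i - fst y i)).
  set (dq := fun i => q i - fst y i).
  apply (canc _ _ (psi (vadd v v0))).
  - transitivity (mul (psi q) (psi (vadd u v0))).
    { rewrite !psi_add, mulA, Hbv, psi_add, mulA. reflexivity. }
    rewrite Hap. transitivity (mul (psi (vadd dq (fst y))) (psi (vadd v u0))).
    { f_equal. apply psi_ext. intros i Hi. unfold vadd, dq. specialize (Hq' i Hi). lia. }
    rewrite !psi_add. rewrite (mul4 _ (psi dq) b0), Hbv0, (mul4 _ (psi dq) (psi (fst y))), psi_add.
    reflexivity.
  - rewrite psi_add, mulA, Hbv, <- psi_add. apply (face_nz F); auto.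
    repeat apply supp_add; auto.
Qed.

End Lin.
Section Build.
Variable F : nat -> bool.
Hypothesis HF : face F.

Definition upd (J : nat -> bool) i : nat -> bool := fun j => J j || Nat.eqb j i.
Definition indepb J : bool := if excluded_middle_informative (indep J) then true else false.
Fixpoint G n : nat -> bool :=
  match n with
  | 0 => fun _ => false
  | S n => if F n && indepb (upd (G n) n) then upd (G n) n else G n
  end.
Definition dep J i := exists u v, supp (upd J i) u /\ supp (upd J i) v /\ psi u = psi v /\ u <> v.

Lemma supp_mono (J J' : nat -> bool) u : (forall j, J j = true -> J' j = true) -> supp J u -> supp J' u.
Proof. intros H Hu j Hj. apply Hu. destruct (J j) eqn:E; auto. rewrite (H j E) in Hj. discriminate. Qed.

Lemma G_sub n i : G n i = true -> F i = true /\ i < n.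
Proof.
  induction n as [|n IH]; simpl; [discriminate|].
  destruct (F n && indepb (upd (G n) n)) eqn:E.
  - unfold upd. intros H. apply orb_true_iff in H. destruct H as [H|H].
    + apply IH in H. split; [apply H|lia].
    + apply Nat.eqb_eq in H. subst. apply andb_true_iff in E. split; [apply E|lia].
  - intros H. apply IH in H. split; [apply H|lia].
Qed.

Lemma G_mono n i : G n i = true -> G (S n) i = true.
Proof. simpl. destruct (F n && indepb (upd (G n) n)); auto. unfold upd. intros ->. reflexivity. Qed.

Lemma G_mono_le n m i : n <= m -> G n i = true -> G m i = true.
Proof. induction 1 as [|m Hm IHm]; auto. intros Hg. apply G_mono; auto. Qed.

Lemma G_indep n : indep (G n).
Proof.
  induction n as [|n IH]; simpl.
  - intros u v Hu Hv _. apply functional_extensionality. intro j. rewrite Hu, Hv; auto.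
  - destruct (F n && indepb (upd (G n) n)) eqn:E; auto.
    apply andb_true_iff in E. destruct E as [_ E]. unfold indepb in E.
    destruct (excluded_middle_informative _); auto. discriminate.
Qed.

Lemma G_dep n i : i < n -> F i = true -> G n i = false -> dep (G n) i.
Proof.
  induction n as [|n IH]; intros Hi Fi Gi; [lia|].
  destruct (Nat.eq_dec i n) as [->|Hne].
  - simpl in Gi |- *. rewrite Fi in Gi |- *. simpl in Gi |- *.
    destruct (indepb (upd (G n) n)) eqn:E.
    + unfold upd in Gi. rewrite Nat.eqb_refl, orb_true_r in Gi. discriminate.
    + unfold indepb in E. destruct (excluded_middle_informative _) as [_|Hn]; [discriminate|].
      unfold indep in Hn. apply not_all_ex_not in Hn. destruct Hn as [u Hn].
      apply not_all_ex_not in Hn. destruct Hn as [v Hn].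
      exists u, v. split; [|split; [|split]]; apply NNPP; intro C; apply Hn; intros; try tauto; exfalso; tauto.
  - assert (Gi' : G n i = false).
    { destruct (G n i) eqn:E; auto. rewrite (G_mono n i E) in Gi. discriminate. }
    destruct (IH ltac:(lia) Fi Gi') as [u [v [Hu [Hv [Huv Hne']]]]].
    assert (Hm : forall j, upd (G n) i j = true -> upd (G (S n)) i j = true).
    { intros j; unfold upd; intros H; apply orb_true_iff in H; apply orb_true_iff; destruct H; auto.
      left; apply G_mono; auto. }
    exists u, v. split; [|split; [|split]]; auto; apply (supp_mono _ _ _ Hm); auto.
Qed.

Lemma canc_psi m w X Y : psi (vadd (vscale m w) X) = psi (vadd (vscale m w) Y) ->
  psi (vadd (vscale m w) X) <> zero -> psi X = psi Y.
Proof.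
  rewrite !psi_add. intros H Hn. rewrite (mulC _ _ (psi X)), (mulC _ _ (psi Y)) in H.
  apply (canc _ _ _ H). rewrite mulC. auto.
Qed.

Lemma scale_rel m D' w al' be' : psi (vadd (vscale D' w) al') = psi be' ->
  psi (vadd (vscale (D' * m) w) (vscale m al')) = psi (vscale m be').
Proof.
  intros H. replace (vadd (vscale (D' * m) w) (vscale m al')) with (vscale m (vadd (vscale D' w) al')).
  - rewrite !psi_scale, H. reflexivity.
  - apply functional_extensionality; intro; unfold vadd, vscale; nia.
Qed.

Lemma rel_ex J i : (forall j, J j = true -> F j = true) -> indep J -> F i = true -> J i = false -> dep J i ->
  exists a al' be', 1 <= a /\ supp J al' /\ supp J be' /\ psi (vadd (vscale a (delta i)) al') = psi be'.
Proof.
  intros HJF HJ Fi Ji [u [v [Hu [Hv [Huv Hne]]]]].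
  set (u' := fun j => if j =? i then 0 else u j). set (v' := fun j => if j =? i then 0 else v j).
  assert (Hu' : supp J u').
  { intros j Hj. unfold u'. destruct (j =? i) eqn:E; auto. apply Hu. unfold upd. rewrite Hj, E. auto. }
  assert (Hv' : supp J v').
  { intros j Hj. unfold v'. destruct (j =? i) eqn:E; auto. apply Hv. unfold upd. rewrite Hj, E. auto. }
  assert (HupF : forall j, upd J i j = true -> F j = true).
  { intros j. unfold upd. intros H. apply orb_true_iff in H. destruct H as [H|H]; auto.
    apply Nat.eqb_eq in H. subst; auto. }
  assert (Hnz : psi u <> zero) by (apply (face_nz F); auto; apply (supp_mono (upd J i)); auto).
  assert (Eu : forall m, m <= u i -> u = vadd (vscale m (delta i)) (vadd (vscale (u i - m) (delta i)) u')).
  { intros m Hm. apply functional_extensionality; intro j. unfold vadd, vscale, delta, u'.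
    destruct (Nat.eqb_spec j i); subst; lia. }
  assert (Ev : forall m, m <= v i -> v = vadd (vscale m (delta i)) (vadd (vscale (v i - m) (delta i)) v')).
  { intros m Hm. apply functional_extensionality; intro j. unfold vadd, vscale, delta, v'.
    destruct (Nat.eqb_spec j i); subst; lia. }
  destruct (lt_eq_lt_dec (u i) (v i)) as [[Hlt|Heq]|Hgt].
  - exists (v i - u i), v', u'. split; [lia|]. split; auto. split; auto.
    rewrite (Eu (u i)), (Ev (u i)) in Huv by lia. rewrite (Eu (u i)) in Hnz by lia.
    apply canc_psi in Huv; auto. rewrite Nat.sub_diag in Huv.
    rewrite <- Huv. apply psi_ext; intros; unfold vadd, vscale; lia.
  - exfalso. apply Hne. rewrite (Eu (u i)), (Ev (u i)) in Huv by lia. rewrite (Eu (u i)) in Hnz by lia.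
    apply canc_psi in Huv; auto. rewrite <- Heq, Nat.sub_diag in Huv.
    assert (E0 : forall w, vadd (vscale 0 (delta i)) w = w).
    { intro w. apply functional_extensionality; intro; unfold vadd, vscale; lia. }
    rewrite !E0 in Huv. apply HJ in Huv; auto.
    apply functional_extensionality; intro j. destruct (Nat.eq_dec j i) as [->|Hji]; auto.
    pose proof (equal_f Huv j) as E. unfold u', v' in E. destruct (Nat.eqb_spec j i); [lia|auto].
  - exists (u i - v i), u', v'. split; [lia|]. split; auto. split; auto.
    rewrite (Ev (v i)) in Huv by lia. rewrite (Eu (v i)) in Huv, Hnz by lia.
    apply canc_psi in Huv; auto. rewrite Nat.sub_diag in Huv.
    rewrite Huv. apply psi_ext; intros; unfold vadd, vscale; lia.
Qed.

Lemma D_ex J : (forall j, J j = true -> F j = true) -> indep J ->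
  (forall i, i < k -> F i = true -> J i = false -> dep J i) ->
  forall n, exists D, 1 <= D /\ forall i, i < n -> i < k -> F i = true -> J i = false ->
    exists al' be', supp J al' /\ supp J be' /\ psi (vadd (vscale D (delta i)) al') = psi be'.
Proof.
  intros HJF HJ Hdep n. induction n as [|n [D [HD HDi]]].
  - exists 1. split; auto. intros; lia.
  - destruct (classic (n < k /\ F n = true /\ J n = false)) as [[Hn [Fn Jn]]|Hno].
    + destruct (rel_ex J n HJF HJ Fn Jn (Hdep n Hn Fn Jn)) as [a [al' [be' [Ha [Hal' [Hbe' Hr]]]]]].
      exists (D * a). split; [nia|]. intros i Hi Hik Fi Ji. destruct (Nat.eq_dec i n) as [->|Hin].
      * exists (vscale D al'), (vscale D be'). split; [apply supp_scale; auto|]. split; [apply supp_scale; auto|].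
        rewrite Nat.mul_comm. apply scale_rel; auto.
      * destruct (HDi i ltac:(lia) Hik Fi Ji) as [al0 [be0 [A1 [A2 A3]]]].
        exists (vscale a al0), (vscale a be0). split; [apply supp_scale; auto|]. split; [apply supp_scale; auto|].
        apply scale_rel; auto.
    + exists D. split; auto. intros i Hi Hik Fi Ji. destruct (Nat.eq_dec i n) as [->|Hin].
      * exfalso. apply Hno. auto.
      * apply HDi; auto. lia.
Qed.

Lemma face_data : exists J D al be, (forall j, J j = true -> F j = true) /\ indep J /\ 1 <= D /\
  (forall i, supp J (al i)) /\ (forall i, supp J (be i)) /\
  (forall i, i < k -> F i = true -> J i = false -> psi (vadd (vscale D (delta i)) (al i)) = psi (be i)).
Proof.
  set (J := G k).
  assert (HJF : forall j, J j = true -> F j = true) by (intros j Hj; apply (G_sub k j Hj)).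
  assert (HJ : indep J) by apply G_indep.
  assert (Hdep : forall i, i < k -> F i = true -> J i = false -> dep J i) by (intros; apply G_dep; auto).
  destruct (D_ex J HJF HJ Hdep k) as [D [HD HDi]].
  assert (Hc : forall i, exists p : pr, supp J (fst p) /\ supp J (snd p) /\
     (i < k -> F i = true -> J i = false -> psi (vadd (vscale D (delta i)) (fst p)) = psi (snd p))).
  { intro i. destruct (classic (i < k /\ F i = true /\ J i = false)) as [[Hi [Fi Ji]]|Hno].
    - destruct (HDi i Hi Hi Fi Ji) as [al' [be' [A1 [A2 A3]]]]. exists (al', be'). simpl. auto.
    - exists pzero. simpl. split; [intros j _; reflexivity|]. split; [intros j _; reflexivity|].
      intros Hi Fi Ji. exfalso. auto. }
  set (f := fun i => proj1_sig (constructive_indefinite_description _ (Hc i))).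
  exists J, D, (fun i => fst (f i)), (fun i => snd (f i)).
  split; auto. split; auto. split; auto.
  split; [intro i; apply (proj2_sig (constructive_indefinite_description _ (Hc i)))|].
  split; [intro i; apply (proj2_sig (constructive_indefinite_description _ (Hc i)))|].
  intros i; apply (proj2_sig (constructive_indefinite_description _ (Hc i))).
Qed.

End Build.
Fixpoint blists n : list (list bool) :=
  match n with 0 => [[]] | S n => flat_map (fun l => [true :: l; false :: l]) (blists n) end.
Lemma blists_complete n l : length l = n -> In l (blists n).
Proof.
  revert l. induction n as [|n IH]; intros l Hl.
  - destruct l; [left; auto|simpl in Hl; lia].
  - destruct l as [|x l]; [simpl in Hl; lia|]. simpl in Hl. apply in_flat_map. exists l. split; [apply IH; lia|].
    destruct x; simpl; auto.
Qed.
Definition Fl (l : list bool) : nat -> bool := fun i => nth i l false.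

Lemma finite_main : exists bs : list B, forall b : B, exists a bi, In bi bs /\ b = mul (phi a) bi.
Proof.
  assert (Hl : forall l, In l (blists k) -> exists bs : list B, face (Fl l) ->
    forall b N e e', 1 <= N -> pow b N = psi e -> pow b (S N) = psi e' ->
      supp (Fl l) e -> supp (Fl l) e' -> exists a bi, In bi bs /\ b = mul (phi a) bi).
  { intros l _. destruct (classic (face (Fl l))) as [Hf|Hn].
    - destruct (face_data (Fl l) Hf) as [J [D [al [be [HJF [HJ [HD [Hal [Hbe Hrel]]]]]]]]].
      destruct (face_cover (Fl l) J D al be Hf HJF HJ HD Hal Hbe Hrel) as [bs Hbs].
      exists bs. intros _. exact Hbs.
    - exists []. intros Hf. contradiction. }
  destruct (list_choice (blists k) _ Hl) as [lbs Hlbs].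
  exists (zero :: concat lbs). intros b.
  destruct (classic (b = zero)) as [Hb0|Hb0].
  { exists zero, zero. split; [left; auto|]. rewrite (proj2 (proj2 Hmor)), Hb0. symmetry. apply mul0m. }
  destruct (Hpw b) as [N0 HN0].
  set (N := S N0).
  assert (HNz : forall n, pow b (S n) <> zero) by (intro n; apply red_nz; auto; apply HR).
  destruct (pow_rep b N (HN0 N ltac:(unfold N; lia))) as [Hz|[e [He Hek]]].
  { exfalso. apply (HNz N0). exact Hz. }
  destruct (pow_rep b (S N) (HN0 (S N) ltac:(unfold N; lia))) as [Hz|[e' [He' Hek']]].
  { exfalso. apply (HNz N). exact Hz. }
  set (F := fun i => (i <? k) && (0 <? e i + e' i)).
  set (l := map F (seq 0 k)).
  assert (EF : Fl l = F).
  { apply functional_extensionality. intro i. unfold Fl, l. destruct (Nat.lt_ge_cases i k) as [Hi|Hi].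
    - rewrite (nth_indep _ false (F 0)) by (rewrite length_map, length_seq; auto).
      rewrite map_nth, seq_nth by auto. reflexivity.
    - rewrite nth_overflow by (rewrite length_map, length_seq; auto). unfold F.
      destruct (Nat.ltb_spec i k); [lia|reflexivity]. }
  assert (HsF : forall u, (forall i, k <= i -> u i = 0) -> (forall i, u i <= e i + e' i) -> supp F u).
  { intros u Hu Hue i Hi. unfold F in Hi. destruct (Nat.ltb_spec i k); [|apply Hu; lia].
    destruct (Nat.ltb_spec 0 (e i + e' i)); [discriminate|]. specialize (Hue i). lia. }
  assert (Hface : face F).
  { split.
    - intros i Hi. unfold F in Hi. destruct (Nat.ltb_spec i k); [auto|discriminate].
    - assert (E : vadd e e' = vadd (ind F) (fun i => e i + e' i - ind F i)).
      { apply functional_extensionality. intro i. unfold vadd, ind, F.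
        destruct (Nat.ltb_spec i k), (Nat.ltb_spec 0 (e i + e' i)); simpl; lia. }
      assert (Hnz : psi (vadd e e') <> zero).
      { rewrite psi_add, <- He, <- He', <- pow_add. replace (N + S N) with (S (N + N)) by lia. auto. }
      rewrite E, psi_add in Hnz. exact (mul_nz_l _ _ Hnz). }
  destruct (Hlbs l) as [bs [Hbs Hcov]].
  { apply blists_complete. unfold l. rewrite length_map, length_seq. reflexivity. }
  rewrite EF in Hcov.
  destruct (Hcov Hface b N e e') as [a [bi [Hbi Heq]]]; auto.
  - unfold N; lia.
  - apply HsF; auto. intro; lia.
  - apply HsF; auto. intro; lia.
  - exists a, bi. split; auto. right. apply in_concat. exists bs. auto.
Qed.

End Main.



Theorem lemma1p17 (A S : pmonoid) (phi : A -> S) :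
  is_pc A -> fin_gen A -> is_seminormalization phi -> finite_morph phi.
Proof.
  intros Hpc [gens Hfg] [Hmor [Hsn [Hinj Hpw]]].
  unfold finite_morph.
  exact (finite_main A S phi Hpc Hmor Hsn Hinj Hpw gens Hfg).
Qed.
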